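(* Let $c\in[0,1]$. For every countable collection of languages $\mathcal{L}$ there is a set-based generator that generates in the limit from $\mathcal{L}$ and achieves set-based upper density at least $1-c$ under adversaries that use an enumeration with finite noise and $c$-omissions. In particular, if the adversary uses an enumeration with finite noise and finite omissions, there is a set-based generator that generates in the limit from $\mathcal{L}$ and achieves set-based upper density $1$.
   Context: The universe is $U=\mathbb{N}$ with its natural order. A language is an infinite subset of $U$; a collection is a countable family of languages. For $A,B\subseteq\mathbb{N}$ with $B=\{b_1<b_2<\cdots\}$, $\mu_{\rm up}(A,B)=\limsup_n\frac1n|A\cap\{b_1,\dots,b_n\}|$ and $\mu_{\rm low}(A,B)=\liminf_n\frac1n|A\cap\{b_1,\dots,b_n\}|$. An enumeration is a sequence of distinct elements of $U$; $S_n=\{x_1,\dots,x_n\}$. An enumeration of $L$ with finite noise is a sequence in which every element of $L$ appears exactly once and $|\{x_1,x_2,\dots\}\setminus L|<\infty$. An enumeration of $K$ with finite noise and $c$-omissions is an enumeration with finite noise of some $\hat K\subseteq K$ with $\mu_{\rm low}(\hat K,K)\ge 1-c$; with finite noise and finite omissions it is one of some $\hat K\subseteq K$ with $|K\setminus\hat K|<\infty$. A set-based generator is a sequence of maps that, given $x_1,\dots,x_n$ (and knowledge of $\mathcal{L}$, not of $K$), outputs a set $A_n\subseteq U\setminus S_n$. It generates in the limit if for every $K\in\mathcal{L}$ and every admissible enumeration of $K$ there is $n^\star$ with $A_n\subseteq K$ for all $n\ge n^\star$. It achieves set-based upper density $\rho$ if $\limsup_n\mu_{\rm low}(A_n,K)\ge\rho$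 (for every such $K$ and enumeration). *)

(* Defs.v *)
From HB Require Import structures.
From mathcomp Require Import all_boot all_order all_algebra.
From mathcomp Require Import all_classical all_reals.
From mathcomp Require Import topology normedtype sequences.
Set Implicit Arguments. Unset Strict Implicit. Unset Printing Implicit Defensive.
Import Order.TTheory GRing.Theory Num.Theory.
Local Open Scope classical_set_scope.
Local Open Scope ring_scope.

(* Universe U = nat.  Sets of naturals are [set nat] (Prop-valued). *)

Definition rank_below (B : set nat) (y : nat) : nat :=
  count (fun z => `[< B z >]) (iota 0 y).

(* b_(k+1): the element of B having exactly k smaller elements in B
   (well defined when B is infinite; 0-indexed: b_elem B 0 = b_1) *)
Definition b_elem (B : set nat) (k : nat) : nat :=
  xget 0%N [set y | B y /\ rank_below B y = k].

Definition count_first (A B : set nat) (n : nat) : nat :=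
  count (fun y => `[< A y >]) (map (b_elem B) (iota 0 n)).

Definition mu_low (R : realType) (A B : set nat) : \bar R :=
  limn_einf (fun n : nat =>
    (((count_first A B n.+1)%:R / (n.+1)%:R : R))%:E).

(* an enumeration is an (infinite) sequence x : nat -> nat; its prefix
   x_1..x_n is (prefix x n), and S_n = its elements *)
Definition prefix (x : nat -> nat) (n : nat) : seq nat := map x (iota 0 n).

Definition set_generator := seq nat -> set nat.
Definition valid_generator (G : set_generator) : Prop :=
  forall (s : seq nat) (y : nat), G s y -> y \notin s.

Definition enum_finite_noise (Khat : set nat) (x : nat -> nat) : Prop :=
  injective x /\ Khat `<=` range x /\ finite_set (range x `\` Khat).

Definition enum_noise_c_omissions (R : realType) (c : R) (K : set nat)
    (x : nat -> nat) : Prop :=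
  exists Khat : set nat, Khat `<=` K /\ ((1 - c)%:E <= mu_low R Khat K)%E /\
    enum_finite_noise Khat x.

Definition enum_noise_finite_omissions (K : set nat) (x : nat -> nat) : Prop :=
  exists Khat : set nat, Khat `<=` K /\ finite_set (K `\` Khat) /\
    enum_finite_noise Khat x.

Definition generates_in_limit (C : set (set nat))
    (adm : set nat -> (nat -> nat) -> Prop) (G : set_generator) : Prop :=
  forall K x, C K -> adm K x ->
    exists nstar : nat, forall n : nat, (nstar <= n)%N -> G (prefix x n) `<=` K.

Definition achieves_upper_density (R : realType) (C : set (set nat))
    (adm : set nat -> (nat -> nat) -> Prop) (G : set_generator) (rho : R) : Prop :=
  forall K x, C K -> adm K x ->
    (rho%:E <= limn_esup (fun n : nat => mu_low R (G (prefix x n)) K))%E.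

Definition collection (C : set (set nat)) : Prop :=
  countable C /\ (forall K, C K -> infinite_set K).

(* Main.v *)
Require Import Defs.
From HB Require Import structures.
From mathcomp Require Import all_boot all_order all_algebra.
From mathcomp Require Import all_classical all_reals.
From mathcomp Require Import topology normedtype sequences ereal.
From mathcomp Require Import zify.
Import Order.TTheory GRing.Theory Num.Theory.
Local Open Scope classical_set_scope.
Local Open Scope ring_scope.

Lemma rank_split (B : set nat) a b : (a <= b)%N ->
  rank_below B b = (rank_below B a + count (fun z => `[< B z >]) (iota a (b - a)))%N.
Proof. by move=> ab; rewrite /rank_below -{1}(subnKC ab) iotaD count_cat. Qed.

Lemma inf_above {K : set nat} : infinite_set K -> forall N, exists y, (N <= y)%N /\ K y.
Proof.
move=> iK N; apply: contrapT => H; apply: iK.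
apply: (@sub_finite_set _ _ `I_N); last exact: finite_II.
move=> y Ky /=; rewrite ltnNge; apply/negP => Ny; apply: H; by exists y.
Qed.

Lemma b_elem_ex {K : set nat} : infinite_set K -> forall k,
  exists y, K y /\ rank_below K y = k.
Proof.
move=> iK; elim=> [|k [y [Ky rk]]].
  have [y0 [_ Ky0]] := inf_above iK 0.
  have exP : exists y, `[< K y >] by exists y0; apply/asboolP.
  case: (ex_minnP exP) => m /asboolP Km mmin; exists m; split => //.
  apply/eqP; rewrite eqn0Ngt -has_count; apply/hasPn => z.
  rewrite mem_iota => /andP[_ zm]; apply/negP => Kz; have := mmin _ Kz.
  by rewrite leqNgt zm.
have [y1 [y1y Ky1]] := inf_above iK y.+1.
have exP : exists z, (y < z)%N && `[< K z >] by exists y1; rewrite y1y; apply/asboolP.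
case: (ex_minnP exP) => m /andP[ym /asboolP Km] mmin; exists m; split => //.
rewrite (@rank_split K _ _ ym) (@rank_split K _ _ (leqnSn y)) rk subSnn /=.
have -> : `[< K y >] = true by apply/asboolP.
have -> : count (fun z => `[< K z >]) (iota y.+1 (m - y.+1)) = 0%N.
  apply/eqP; rewrite eqn0Ngt -has_count; apply/hasPn => z.
  rewrite mem_iota => /andP[yz zm]; apply/negP => Kz.
  have := mmin z; rewrite yz Kz => /(_ isT).
  by rewrite leqNgt (leq_trans zm) // subnKC.
by rewrite !addn0 addn1.
Qed.

Lemma b_elem_spec {K : set nat} : infinite_set K -> forall k,
  K (b_elem K k) /\ rank_below K (b_elem K k) = k.
Proof. by move=> iK k; have := xgetPex 0%N (b_elem_ex iK k). Qed.

Lemma b_elem_uniq (K : set nat) n : infinite_set K -> uniq (map (b_elem K) (iota 0 n)).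
Proof.
move=> iK; rewrite map_inj_uniq ?iota_uniq // => a b ab.
by rewrite -(b_elem_spec iK a).2 ab (b_elem_spec iK b).2.
Qed.

Lemma einf_le_near (R : realType) (u v : (\bar R)^nat) :
  (\forall n \near \oo, (u n <= v n)%E) -> (limn_einf u <= limn_einf v)%E.
Proof.
move=> [N _ HN]; rewrite !limn_einf_lim; apply: lee_lim.
- exact: is_cvg_einfs.
- exact: is_cvg_einfs.
exists N => // m /= Nm; apply: le_ereal_inf_tmp => _ [k /= mk <-].
apply: (@le_trans _ _ (u k)); first by apply: ereal_inf_lbound; exists k.
by apply: HN => /=; apply: leq_trans mk.
Qed.

Lemma count_uniq_le (l s : seq nat) : uniq l -> (count (mem s) l <= size s)%N.
Proof.
move=> ul; rewrite -size_filter; apply: uniq_leq_size; first exact: filter_uniq.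
by move=> z; rewrite mem_filter => /andP[].
Qed.

Lemma count_first_le (A B K : set nat) (s : seq nat) n : infinite_set K ->
  (forall y, B y -> A y \/ y \in s) ->
  (count_first B K n <= count_first A K n + size s)%N.
Proof.
move=> iK H; rewrite /count_first.
set l := map (b_elem K) (iota 0 n).
apply: (@leq_trans (count (predU (fun y => `[< A y >]) (mem s)) l)).
  apply: sub_count => y /= /asboolP /H [Ay|ys]; last by rewrite ys orbT.
  by apply/orP; left; apply/asboolP.
apply: (@leq_trans (count (fun y => `[< A y >]) l + count (mem s) l)).
  by rewrite -(count_predUI (fun y => `[< A y >]) (mem s) l) leq_addr.
rewrite leq_add2l; apply: count_uniq_le; exact: b_elem_uniq.
Qed.

Lemma mu_low_ge (R : realType) (A B K : set nat) (s : seq nat) : infinite_set K ->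
  (forall y, B y -> A y \/ y \in s) -> (mu_low R B K <= mu_low R A K)%E.
Proof.
move=> iK H; apply/lee_addgt0Pr => e e0.
rewrite addeC -limn_einf_shift //; apply: einf_le_near.
have d0 : (0 : R) < e / (size s).+1%:R by rewrite divr_gt0 // ltr0n.
have := near_infty_natSinv_lt (PosNum d0); apply: filterS => n /= hn.
rewrite -EFinD lee_fin.
have hc := @count_first_le A B K s n.+1 iK H.
set a := count_first A K n.+1 in hc *; set b := count_first B K n.+1 in hc *.
have np : (0 : R) < n.+1%:R by rewrite ltr0n.
rewrite ler_pdivrMr // mulrDl divfK ?gt_eqF //.
apply: (@le_trans _ _ (a + size s)%:R); first by rewrite ler_nat.
rewrite natrD addrC lerD2r.
have : (size s)%:R * n.+1%:R^-1 <= e.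
  apply: (@le_trans _ _ ((size s).+1%:R * (e / (size s).+1%:R))).
    apply: ler_pM; rewrite ?ler0n ?invr_ge0 ?ler0n ?ler_nat //; exact: ltW.
  by rewrite mulrC divfK // gt_eqF // ltr0n.
by rewrite ler_pdivrMr.
Qed.

Lemma esup_ge_cofinal (R : realType) (v : (\bar R)^nat) (r : \bar R) :
  (forall N, exists2 n, (N <= n)%N & (r <= v n)%E) -> (r <= limn_esup v)%E.
Proof.
move=> H; rewrite limn_esup_lim; apply: lime_ge; first exact: is_cvg_esups.
apply: nearW => m; have [n mn rn] := H m.
by apply: (le_trans rn); apply: ereal_sup_ubound; exists n.
Qed.

Lemma einf_cst (R : realType) (r : \bar R) : limn_einf (fun _ : nat => r) = r.
Proof. by have [-> _] := cvg_limn_einf_sup (cvg_cst r). Qed.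

Lemma mu_low_self (R : realType) (K : set nat) : infinite_set K -> mu_low R K K = 1%E.
Proof.
move=> iK; rewrite /mu_low (_ : (fun n => _) = fun _ => 1%E) ?einf_cst //.
apply: funext => n; have -> : count_first K K n.+1 = n.+1.
  rewrite /count_first (eq_in_count (a2 := predT)) ?count_predT ?size_map ?size_iota //.
  by move=> y /mapP [k _ ->]; apply/asboolP; exact: (b_elem_spec iK k).1.
by rewrite divff // pnatr_eq0.
Qed.

Local Notation pref := Defs.prefix.
Definition unp (h : nat) : nat * nat := odflt (0%N, 0%N) (unpickle h).
Definition consb (L : nat -> set nat) (s : seq nat) (h : nat) : bool :=
  (count (fun y => ~~ `[< L (unp h).1 y >]) s <= (unp h).2)%N.
Definition chg L (s : seq nat) h := consb L (take (size s).-1 s) h && ~~ consb L s h.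
Definition ebound L (s : seq nat) := find (chg L s) (iota 0 (size s).+1).
Definition gen (L : nat -> set nat) : set_generator := fun s =>
  [set y | (forall h, (h < ebound L s)%N -> consb L s h -> L (unp h).1 y) /\ y \notin s].

Lemma size_pref x n : size (pref x n) = n.
Proof. by rewrite /pref size_map size_iota. Qed.

Lemma prefD x m n : (m <= n)%N -> pref x n = pref x m ++ map x (iota m (n - m)).
Proof. by move=> mn; rewrite /pref -{1}(subnKC mn) iotaD map_cat. Qed.

Lemma prefS x n : pref x n.+1 = rcons (pref x n) (x n).
Proof. by rewrite (prefD x n n.+1) // subSnn /= cats1. Qed.

Lemma take_pref x n : take (size (pref x n)).-1 (pref x n) = pref x n.-1.
Proof.
rewrite size_pref; case: n => [|n] //=.
by rewrite prefS -cats1 take_size_cat // size_pref.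
Qed.

Lemma mem_pref x k n : injective x -> (x k \in pref x n) = (k < n)%N.
Proof. by move=> ix; rewrite /pref mem_map // mem_iota. Qed.

Lemma cons_anti L x h m n : (m <= n)%N ->
  consb L (pref x n) h -> consb L (pref x m) h.
Proof.
move=> mn; rewrite /consb (prefD x _ _ mn) count_cat; apply: leq_trans; exact: leq_addr.
Qed.

Definition En L x n := ebound L (pref x n).
Definition chgn L x n h := consb L (pref x n.-1) h && ~~ consb L (pref x n) h.

Lemma chgnE L x n h : chg L (pref x n) h = chgn L x n h.
Proof. by rewrite /chg take_pref. Qed.

Lemma En_le L x n : (En L x n <= n.+1)%N.
Proof. by rewrite /En /ebound size_pref -[X in (_ <= X)%N](size_iota 0 n.+1) find_size. Qed.

Lemma En_chg L x n : (En L x n < n.+1)%N -> chgn L x n (En L x n).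
Proof.
rewrite /En /ebound size_pref => hl.
have hs : has (chg L (pref x n)) (iota 0 n.+1) by rewrite has_find size_iota.
have := nth_find 0%N hs; rewrite nth_iota // add0n chgnE //.
Qed.

Lemma En_min L x n h : (h <= n)%N -> chgn L x n h -> (En L x n <= h)%N.
Proof.
move=> hn ch; rewrite leqNgt; apply/negP => hlt.
have := before_find 0%N hlt; rewrite nth_iota ?size_pref ?add0n ?ltnS //.
by rewrite chgnE ch.
Qed.

Lemma chg_eventually L x h : exists N, forall n, (N <= n)%N -> ~~ chgn L x n h.
Proof.
have [[n0 hn0]|H] := pselect (exists n0, ~~ consb L (pref x n0) h).
  exists n0.+1 => n nn; rewrite /chgn negb_and negbK; apply/orP; left.
  apply/negP => hc; move/negP: hn0; apply; apply: cons_anti hc.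
  by rewrite -ltnS prednK // (leq_trans _ nn).
exists 0%N => n _; rewrite /chgn negb_and negbK; apply/orP; right.
by apply: contrapT => /negP hc; apply: H; exists n.
Qed.

Lemma En_large L x B : exists N, forall n, (N <= n)%N -> (B <= En L x n)%N.
Proof.
have [N HN] : exists N, forall h, (h < B)%N -> forall n, (N <= n)%N -> ~~ chgn L x n h.
  elim: B => [|B [N HN]]; first by exists 0%N.
  have [N1 HN1] := chg_eventually L x B.
  exists (maxn N N1) => h; rewrite ltnS leq_eqVlt => /orP[/eqP ->|hB] n.
    by rewrite geq_max => /andP[_]; exact: HN1.
  by rewrite geq_max => /andP[+ _]; exact: HN.
exists (maxn N B) => n; rewrite geq_max => /andP[Nn Bn].
rewrite leqNgt; apply/negP => EB.
have hl : (En L x n < n.+1)%N by rewrite (leq_trans EB) // leqW.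
by move/negP: (HN _ EB _ Nn); apply; apply: En_chg.
Qed.

Lemma first_change L x h n n' : consb L (pref x n) h -> (n <= n')%N ->
  ~~ consb L (pref x n') h -> exists m, [/\ (n < m)%N, (m <= n')%N & chgn L x m h].
Proof.
move=> hc; elim: n' => [|n' IH].
  by rewrite leqn0 => /eqP -> /negP.
rewrite leq_eqVlt => /orP[/eqP <-|]; first by move/negP.
rewrite ltnS => nn' hnc.
case hc' : (consb L (pref x n') h).
  by exists n'.+1; split => //; rewrite /chgn /= hc' hnc.
have [m [m1 m2 m3]] := IH nn' (negbT hc').
by exists m; split => //; rewrite (leq_trans m2).
Qed.

Lemma mono_const (c : nat -> nat) t : (forall m n, (m <= n)%N -> (c m <= c n)%N) ->
  (forall n, (c n <= t)%N) -> exists N, forall n, (N <= n)%N -> c n = c N.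
Proof.
move=> mono bd.
suff: forall k n, (t - c n <= k)%N -> exists N, forall n, (N <= n)%N -> c n = c N.
  by move=> /(_ t 0%N); apply; rewrite leq_subr.
elim=> [|k IH] n hk.
  exists n => n' nn'; have := mono _ _ nn'; have := bd n'; lia.
have [H|H] := pselect (forall n', (n <= n')%N -> c n' = c n); first by exists n.
have [n' [nn' ne]] : exists n', (n <= n')%N /\ c n' <> c n.
  apply: contrapT => H2; apply: H => n' nn'; apply: contrapT => ne'; apply: H2.
  by exists n'.
apply: (IH n'); have := mono _ _ nn'; have := bd n'; lia.
Qed.

Lemma forever_cons L x h : (forall m, consb L (pref x m) h) ->
  exists N, forall k, ~ L (unp h).1 (x k) -> (k < N)%N.
Proof.
move=> Hc; set c := fun m => count (fun y => ~~ `[< L (unp h).1 y >]) (pref x m).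
have [N HN] : exists N, forall n, (N <= n)%N -> c n = c N.
  apply: (@mono_const c (unp h).2); last by move=> n; exact: Hc.
  by move=> m n mn; rewrite /c (prefD x _ _ mn) count_cat leq_addr.
exists N => k nL; rewrite ltnNge; apply/negP => Nk.
have := HN _ (leqW Nk); rewrite -(HN _ Nk) /c prefS -cats1 count_cat /=.
have -> : `[< L (unp h).1 (x k) >] = false by apply/negP => /asboolP.
by rewrite /= addn1; lia.
Qed.

Lemma bound_fin (P : nat -> nat -> Prop) e :
  (forall h, (h < e)%N -> exists N, forall k, P h k -> (k < N)%N) ->
  exists N, forall h, (h < e)%N -> forall k, P h k -> (k < N)%N.
Proof.
elim: e => [|e IH] H; first by exists 0%N.
have [N HN] := IH (fun h he => H h (leqW he)).
have [N1 HN1] := H e (leqnn _).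
exists (maxn N N1) => h; rewrite ltnS leq_eqVlt => /orP[/eqP ->|he] k Pk.
  by rewrite leq_max (HN1 _ Pk) orbT.
by rewrite leq_max (HN _ he _ Pk).
Qed.

Arguments first_change {L x h n n'}.
Arguments forever_cons {L x h}.
Arguments En_min {L x n h}.
Arguments cons_anti {L x h m n}.

Lemma core (C : set (set nat)) : countable C -> exists G, valid_generator G /\
  forall K x Khat, C K -> infinite_set K -> Khat `<=` K -> enum_finite_noise Khat x ->
  (exists nstar, forall n, (nstar <= n)%N -> G (pref x n) `<=` K) /\
  (forall (R : realType) N, exists2 n, (N <= n)%N &
     (mu_low R Khat K <= mu_low R (G (pref x n)) K)%E).
Proof.
move=> /countable_injP [f finj].
pose L i := xget set0 [set K | C K /\ f K = i].
have LK K : C K -> L (f K) = K.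
  move=> CK; have [CK' fK'] : [set K' | C K' /\ f K' = f K] (L (f K)).
    by apply: xgetPex; exists K.
  by apply: finj; rewrite ?inE.
exists (gen L); split; first by move=> s y [].
move=> K x Khat CK iK KhK [xinj [Khx fin]].
have [s0 hs0] := (finite_seqP (range x `\` Khat)).1 fin.
pose hs := pickle (f K, size s0).
have unph : unp hs = (f K, size s0) by rewrite /unp /hs pickleK.
have conss m : consb L (pref x m) hs.
  rewrite /consb unph /= LK //.
  apply: (@leq_trans (count (mem s0) (pref x m))).
    have -> : count (fun y => ~~ `[< K y >]) (pref x m) =
        count (fun y => ~~ `[< K y >] && (y \in pref x m)) (pref x m).
      by apply: eq_in_count => y yl /=; rewrite yl andbT.
    apply: sub_count => y /= /andP[/negP nK /mapP [k _ yk]]; subst y.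
    have : (range x `\` Khat) (x k).
      split; first by exists k.
      by move=> /KhK Kx; apply: nK; apply/asboolP.
    by rewrite hs0.
  by apply: count_uniq_le; rewrite map_inj_uniq // iota_uniq.
split.
  have [N HN] := En_large L x hs.+1.
  exists N => n Nn y [Hy _].
  by have := Hy hs (HN _ Nn) (conss n); rewrite unph /= LK.
move=> R N0.
have exP : exists v, `[< exists n, (N0 <= n)%N /\ En L x n = v >].
  by exists (En L x N0); apply/asboolP; exists N0.
case: (ex_minnP exP) => v /asboolP [n [N0n Env]] vmin.
have vmin' : forall n', (N0 <= n')%N -> (v <= En L x n')%N.
  by move=> n' hn'; apply: vmin; apply/asboolP; exists n'.
exists n => //.
have Fm : forall h, (h < En L x n)%N -> consb L (pref x n) h ->
    forall m, consb L (pref x m) h.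
  move=> h hE hc m; have [mn|nm] := leqP m n; first exact: cons_anti hc.
  apply: contrapT => /negP hnc.
  have [m' [m1 m2 m3]] := first_change hc (ltnW nm) hnc.
  have hm' : (h <= m')%N by have := En_le L x n; lia.
  have := En_min hm' m3; have := vmin' m' (leq_trans N0n (ltnW m1)); lia.
have HB : forall h, (h < En L x n)%N -> exists N, forall k,
    (consb L (pref x n) h /\ ~ L (unp h).1 (x k)) -> (k < N)%N.
  move=> h hE; have [hc|hnc] := boolP (consb L (pref x n) h).
    have [N HN] := forever_cons (Fm h hE hc); exists N => k [_ nL]; exact: HN.
  by exists 0%N => k [hc' _]; move/negP: hnc.
have [Nb HNb] := @bound_fin (fun h k => consb L (pref x n) h /\ ~ L (unp h).1 (x k))
  (En L x n) HB.
apply: (@mu_low_ge R _ _ K (pref x (maxn Nb n)) iK) => y Khy.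
have [k _ yk] := Khx _ Khy; subst y.
have [kl|kg] := ltnP k (maxn Nb n).
  by right; rewrite mem_pref.
rewrite geq_max in kg; case/andP: kg => kN kn.
left; split; last by rewrite mem_pref // -leqNgt.
move=> h hE hc; apply: contrapT => nL.
by have := HNb h hE k (conj hc nL); lia.
Qed.

Theorem theorem6p1 (R : realType) (c : R) (hc0 : 0 <= c) (hc1 : c <= 1)
    (C : set (set nat)) (hC : collection C) :
  (exists G : set_generator, valid_generator G /\
     generates_in_limit C (enum_noise_c_omissions c) G /\
     achieves_upper_density C (enum_noise_c_omissions c) G (1 - c))
  /\
  (exists G : set_generator, valid_generator G /\
     generates_in_limit C enum_noise_finite_omissions G /\
     achieves_upper_density C enum_noise_finite_omissions G (1 : R)).
Proof.
have [G [vG HG]] := @core C hC.1.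
split; exists G; split => //; split.
- move=> K x CK [Khat [KhK [_ en]]].
  exact: (HG K x Khat CK (hC.2 K CK) KhK en).1.
- move=> K x CK [Khat [KhK [hmu en]]]; apply: esup_ge_cofinal => N.
  have [n Nn hn] := (HG K x Khat CK (hC.2 K CK) KhK en).2 R N.
  by exists n => //; exact: le_trans hmu hn.
- move=> K x CK [Khat [KhK [_ en]]].
  exact: (HG K x Khat CK (hC.2 K CK) KhK en).1.
- move=> K x CK [Khat [KhK [finK en]]]; apply: esup_ge_cofinal => N.
  have iK := hC.2 K CK.
  have [n Nn hn] := (HG K x Khat CK iK KhK en).2 R N.
  exists n => //; apply: le_trans hn.
  have [s1 hs1] := (finite_seqP _).1 finK.
  rewrite -(@mu_low_self R K iK); apply: (@mu_low_ge R _ _ K s1 iK) => y Ky.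
  have [Khy|nKhy] := pselect (Khat y); first by left.
  by right; have : (K `\` Khat) y by []; rewrite hs1.
Qed.
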